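(* The extremal edges of the reduced Schubert system $\overline\Sigma$ satisfy: (1) every vertex $(v,t,s)$ of $\overline\Sigma$ is an end vertex of at most two extremal edges; (2) if $\beta\subset\mathcal B$ is such that the $\beta$-state $\Sigma_\beta$ is not contradictory, $\{(v,t,s),(i,j)\}$ is an extremal edge of $\overline\Sigma$, and $(v,t,s)$ is a vertex of $\Sigma_\beta$ (i.e. $\beta$-relevant), then $i\notin\beta$ and $j\in\beta$.
   Context: Let $Q$ be a quiver with finite $Q_0,Q_1$, $M$ a finite-dimensional complex representation with ordered basis $\mathcal B=\bigcup_p\mathcal B_p$ (bases of $M_p$, total order on $\mathcal B$); $M_v(i)=\sum_j\mu_{v,i,j}j$ for $v:p\to q$, $i\in\mathcal B_p$; coefficient quiver $\Gamma$ with vertices $\mathcal B$, arrows $(v,i,j)$ from $i$ to $j$ with $\mu_{v,i,j}\ne0$; natural $F:\Gamma\to Q$. An arrow $(v,s,t)$ of $\Gamma$ is extremal if for all arrows $(v,s',t')\ne(v,s,t)$ of $\Gamma$, $s<s'$ or $t'<t$. $\mathrm{Rel}^2=\{(i,j):F(i)=F(j),i\le j\}$; $\mathrm{Rel}^3$ = triples $(v,t,s)$ ($v:p\to q$, $s\in F^{-1}(p)$, $t\in F^{-1}(q)$) with some $(v,s',t')\in\Gamma_1$, $s\ge s'$, $t\le t'$. Complete Schubert system $\Sigma$: with $E(v,t,s)=\sum_{(v,s',t')\in\Gamma_1}\mu_{v,s',t'}w_{t,t'}w_{s',s}-\sum_{(v,s',t)\in\Gamma_1}\mu_{v,s',t}w_{s',s}$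 regarded as a polynomial in $w_{i,j}$, $(i,j)\in\mathrm{Rel}^2$ (others set to $0$), $\Sigma$ is the graph on $\mathrm{Rel}^2\sqcup\mathrm{Rel}^3$ with edge $\{(i,j),(v,t,s)\}$ iff $w_{i,j}$ occurs in $E(v,t,s)$ and links $\lambda=((v,t,s),S)$ whenever $\prod_Sw_{i,j}$ occurs with nonzero coefficient $\mu_\lambda$. Partial evaluations: partial $\mathrm{ev}:\mathrm{Rel}^2\dashrightarrow\mathbb C$ such that for each triple and each neighbour $(k,l)$, if all other neighbours are in the domain then so is $(k,l)$ and $\sum_\lambda\mu_\lambda\prod_S\mathrm{ev}=0$. $f_\beta(i,j)=1$ if $i=j\in\beta$, $0$ if $i\in\beta,i\ne j$, $0$ if $j\notin\beta$, undefined otherwise; $\Sigma_\beta$ is contradictory if no partial evaluation extends $f_\beta$, otherwise $\mathrm{ev}_\beta$ is the unique minimal one and $\Sigma_\beta$ is defined as follows: for $\lambda=((v,t,s),S)$ let $\mu_{\beta,\lambda}=\sum\mu_{\lambda'}\prod_{S'\cap\mathrm{dom}\,\mathrm{ev}_\beta}\mathrm{ev}_\beta$ over links $\lambda'=((v,t,s),S')$ of $\Sigma$ with $S'\setminus\mathrm{dom}\,\mathrm{ev}_\beta=S$; the vertices of $\Sigma_\beta$ are the pairs outside $\mathrm{dom}\,\mathrm{ev}_\beta$ and the triples $\tau$ for which some $\mu_{\beta,(\tau,S)}\ne0$. Reduced Schubert system $\overline\Sigma$: for $(v,t,s)\in\mathrm{Rel}^3$ let $\overline E(v,t,s)=\sum_{(v,s,t')\in\Gamma_1,t<t'}\mu_{v,s,t'}w_{t,t'}+\sum_{(v,s',t')\in\Gamma_1,t<t',s'<s}\mu_{v,s',t'}w_{t,t'}w_{s',s}-\sum_{(v,s',t)\in\Gamma_1,s'<s}\mu_{v,s',t}w_{s',s}-\mu_{v,s,t}$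 ($\mu_{v,s,t}=0$ if no such arrow). $\overline\Sigma$ has vertices $\{(i,j)\in\mathrm{Rel}^2:i<j\}\sqcup\{(v,t,s)\in\mathrm{Rel}^3:(v,s,t)\text{ not an extremal arrow}\}$, edges $\{(v,t,s),(i,j)\}$ iff $w_{i,j}$ occurs in $\overline E(v,t,s)$, and links $((v,t,s),S)$ for each monomial $\prod_Sw_{i,j}$ occurring in $\overline E(v,t,s)$ with nonzero coefficient. An edge $\{(v,t,s),(i,j)\}$ of $\overline\Sigma$ is simply linked if $((v,t,s),\{(i,j)\})$ is a link and the edge is a leg of no other link; it is extremal if it is simply linked and either $j=s$ and $(v,i,t)$ is an extremal arrow of $\Gamma$, or $i=t$ and $(v,s,j)$ is an extremal arrow of $\Gamma$. *)

(* Defs.v *)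
From mathcomp Require Import all_boot all_order all_algebra.
From mathcomp Require Import complex Rstruct.
From Stdlib Require Import Reals.
Set Implicit Arguments. Unset Strict Implicit. Unset Printing Implicit Defensive.
Import Order.TTheory GRing.Theory Num.Theory.
Local Open Scope ring_scope.

Notation CC := (Rdefinitions.R[i]).

Section Schubert.
(* Basis B of M: the totally ordered set 'I_n (natural order), with
   F : B -> Q0 sending a basis vector i to the vertex p with i \in B_p.
   Coefficients: mu v i j = mu_{v,i,j} (only meaningful when F i = src v,
   F j = tgt v; other values are irrelevant, see [arrow]). *)
Variables (Q0 Q1 : finType) (src tgt : Q1 -> Q0) (n : nat) (F : 'I_n -> Q0).
Variable (C : fieldType).
Variable (mu : Q1 -> 'I_n -> 'I_n -> C).

Local Notation P := ('I_n * 'I_n)%type.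

Definition arrow (v : Q1) (i j : 'I_n) : bool :=
  [&& F i == src v, F j == tgt v & mu v i j != 0].

Definition muG (v : Q1) (i j : 'I_n) : C := if arrow v i j then mu v i j else 0.

Definition extremal_arrow (v : Q1) (s t : 'I_n) : bool :=
  arrow v s t &&
  [forall s' : 'I_n, forall t' : 'I_n,
     (arrow v s' t' && ((s', t') != (s, t))) ==> ((val s < val s')%nat || (val t' < val t)%nat)].

Definition rel2 (i j : 'I_n) : bool := (F i == F j) && (val i <= val j)%nat.

Definition rel3 (v : Q1) (t s : 'I_n) : bool :=
  [&& F s == src v, F t == tgt v &
      [exists s' : 'I_n, exists t' : 'I_n,
         [&& arrow v s' t', (val s' <= val s)%nat & (val t <= val t')%nat]]].

(* a monomial is an exponent vector on the variables *)
Definition mon := {ffun P -> nat}.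
Definition mon0 : mon := [ffun _ => 0%nat].
Definition mvar (p : P) : mon := [ffun q => nat_of_bool (q == p)].
Definition mon2 (p q : P) : mon := [ffun r => (nat_of_bool (r == p) + nat_of_bool (r == q))%nat].

(* a polynomial is given as a formal sum (list) of terms coefficient*monomial;
   [coef E m] is the coefficient of the monomial m after collecting terms *)
Definition coef (E : seq (C * mon)) (m : mon) : C :=
  \sum_(x <- E | x.2 == m) x.1.

Definition links (E : seq (C * mon)) : seq mon :=
  [seq m <- undup (map snd E) | coef E m != 0].

Definition occurs (E : seq (C * mon)) (p : P) : bool :=
  has (fun m : mon => (0 < m p)%nat) (links E).

(* terms involving a variable w_{i,j} with (i,j) \notin Rel^2 are set to 0 *)
Definition admissible (x : C * mon) : bool :=
  [forall p : P, (0 < x.2 p)%nat ==> rel2 p.1 p.2].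

Definition Ecomp (v : Q1) (t s : 'I_n) : seq (C * mon) :=
  filter admissible
   ([seq (muG v s' t', mon2 (t, t') (s', s)) | s' <- enum 'I_n, t' <- enum 'I_n]
    ++ [seq (- muG v s' t, mvar (s', s)) | s' <- enum 'I_n]).

Definition monval (ev : P -> option C) (m : mon) : C :=
  \prod_(p : P) (odflt 0 (ev p)) ^+ (m p).

Definition evalE (ev : P -> option C) (E : seq (C * mon)) : C :=
  \sum_(m <- links E) coef E m * monval ev m.

Definition indom (ev : P -> option C) (p : P) : bool := ev p != None.

Definition is_peval (ev : P -> option C) : Prop :=
  (forall p : P, indom ev p -> rel2 p.1 p.2) /\
  (forall (v : Q1) (t s : 'I_n), rel3 v t s ->
     forall k : P, occurs (Ecomp v t s) k ->
       (forall p : P, occurs (Ecomp v t s) p -> p != k -> indom ev p) ->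
       indom ev k /\ evalE ev (Ecomp v t s) = 0).

Definition extends (ev f : P -> option C) : Prop :=
  forall (p : P) (x : C), f p = Some x -> ev p = Some x.

Definition fbeta (beta : {set 'I_n}) (p : P) : option C :=
  if rel2 p.1 p.2 then
    if (p.1 == p.2) && (p.1 \in beta) then Some 1
    else if (p.1 \in beta) || (p.2 \notin beta) then Some 0
    else None
  else None.

Definition restrict (ev : P -> option C) (m : mon) : mon :=
  [ffun p => if indom ev p then 0%nat else m p].

Definition monval_dom (ev : P -> option C) (m : mon) : C :=
  \prod_(p : P | indom ev p) (odflt 0 (ev p)) ^+ (m p).

Definition mubeta (ev : P -> option C) (E : seq (C * mon)) (m : mon) : C :=
  \sum_(m' <- links E | restrict ev m' == m) coef E m' * monval_dom ev m'.

(* the triple (v,t,s) is a vertex of Sigma_beta, where ev = ev_beta *)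
Definition beta_relevant (ev : P -> option C) (v : Q1) (t s : 'I_n) : bool :=
  rel3 v t s &&
  has (fun m => mubeta ev (Ecomp v t s) m != 0)
      (map (restrict ev) (links (Ecomp v t s))).

Definition Ered (v : Q1) (t s : 'I_n) : seq (C * mon) :=
  [seq (muG v s t', mvar (t, t')) | t' <- enum 'I_n & (val t < val t')%nat]
  ++ [seq (muG v x.1 x.2, mon2 (t, x.2) (x.1, s))
       | x <- enum {: P} & ((val t < val x.2)%nat && (val x.1 < val s)%nat)]
  ++ [seq (- muG v s' t, mvar (s', s)) | s' <- enum 'I_n & (val s' < val s)%nat]
  ++ [:: (- muG v s t, mon0)].

Definition red_triple (v : Q1) (t s : 'I_n) : bool :=
  rel3 v t s && ~~ extremal_arrow v s t.

Definition red_pair (i j : 'I_n) : bool := rel2 i j && (val i < val j)%nat.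

Definition red_edge (v : Q1) (t s i j : 'I_n) : bool :=
  [&& red_triple v t s, red_pair i j & occurs (Ered v t s) (i, j)].

Definition simply_linked (v : Q1) (t s i j : 'I_n) : bool :=
  [&& red_edge v t s i j,
      mvar (i, j) \in links (Ered v t s) &
      all (fun m : mon => (m == mvar (i, j)) || (m (i, j) == 0%nat))
          (links (Ered v t s))].

Definition extremal_edge (v : Q1) (t s i j : 'I_n) : bool :=
  simply_linked v t s i j &&
  (((j == s) && extremal_arrow v i t) || ((i == t) && extremal_arrow v s j)).

End Schubert.

(* Main.v *)
Require Import Defs.
From mathcomp Require Import all_boot all_order all_algebra.
From mathcomp Require Import complex Rstruct.
From Stdlib Require Import Reals.
Set Implicit Arguments. Unset Strict Implicit. Unset Printing Implicit Defensive.
Import Order.TTheory GRing.Theory Num.Theory.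
Local Open Scope ring_scope.

Section Aux.
Variables (Q0 Q1 : finType) (src tgt : Q1 -> Q0) (n : nat) (F : 'I_n -> Q0).
Variable (C : fieldType).
Variable (mu : Q1 -> 'I_n -> 'I_n -> C).
Local Notation P := ('I_n * 'I_n)%type.
Local Notation mon := (mon n).

Lemma sum_links (E : seq (C * mon)) (g : mon -> C) :
  \sum_(m <- links E) coef E m * g m = \sum_(x <- E) x.1 * g x.2.
Proof.
rewrite /links big_filter big_mkcond.
transitivity (\sum_(m <- undup (map snd E)) \sum_(x <- E | x.2 == m) x.1 * g x.2).
  apply: eq_bigr => m _; rewrite /coef.
  case: ifPn => [_|/negPn/eqP H].
    rewrite mulr_suml; apply: eq_bigr => x /eqP -> //.
    symmetry.
    rewrite (eq_bigr (fun x => x.1 * g m)); last by move=> x /eqP ->.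
    by rewrite -mulr_suml H mul0r.
rewrite (eq_bigr (fun m => \sum_(x <- E) (if x.2 == m then x.1 * g x.2 else 0))); last by move=> m _; rewrite big_mkcond.
rewrite exchange_big big_seq [RHS]big_seq; apply: eq_bigr => x xE.
rewrite (bigD1_seq x.2) ?undup_uniq ?mem_undup ?eqxx /=; last first.
  by []. by apply/mapP; exists x.
rewrite big1 ?addr0 // => m /negbTE; rewrite eq_sym => -> //.
Qed.

Local Notation arrow := (arrow src tgt F mu).
Local Notation muG := (muG src tgt F mu).
Local Notation extremal_arrow := (extremal_arrow src tgt F mu).
Local Notation rel2 := (rel2 F).
Local Notation rel3 := (rel3 src tgt F mu).
Local Notation admissible := (admissible F (C:=C)).
Local Notation Ecomp := (Ecomp src tgt F mu).

Lemma prod_pow1 (x : P -> C) (p : P) (Pr : pred P) :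
  Pr p -> \prod_(r | Pr r) x r ^+ nat_of_bool (r == p) = x p.
Proof.
move=> Pp; rewrite (bigD1 p) //= eqxx expr1 big1 ?mulr1 // => r /andP[_ /negbTE ->].
by rewrite expr0.
Qed.

Lemma monval_mvar (ev : P -> option C) p : monval ev (mvar p) = odflt 0 (ev p).
Proof.
rewrite /monval (eq_bigr (fun r => odflt 0 (ev r) ^+ nat_of_bool (r == p))).
  by rewrite prod_pow1.
by move=> r _; rewrite ffunE.
Qed.

Lemma monval_mon2 (ev : P -> option C) p q : monval ev (mon2 p q) = odflt 0 (ev p) * odflt 0 (ev q).
Proof.
rewrite /monval (eq_bigr (fun r => odflt 0 (ev r) ^+ nat_of_bool (r == p) *
   odflt 0 (ev r) ^+ nat_of_bool (r == q))); last by move=> r _; rewrite ffunE exprD.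
by rewrite big_split /= !prod_pow1.
Qed.

Lemma md_mvar (ev : P -> option C) p : indom ev p -> monval_dom ev (mvar p) = odflt 0 (ev p).
Proof.
move=> Hp; rewrite /monval_dom (eq_bigr (fun r => odflt 0 (ev r) ^+ nat_of_bool (r == p))).
  by rewrite prod_pow1.
by move=> r _; rewrite ffunE.
Qed.

Lemma md_mon2 (ev : P -> option C) p q : indom ev p ->
  monval_dom ev (mon2 p q) = odflt 0 (ev p) * monval_dom ev (mvar q).
Proof.
move=> Hp; rewrite /monval_dom (eq_bigr (fun r => odflt 0 (ev r) ^+ nat_of_bool (r == p) *
   odflt 0 (ev r) ^+ nat_of_bool (r == q))); last by move=> r _; rewrite ffunE exprD.
rewrite big_split /= prod_pow1 //; congr (_ * _); apply: eq_bigr => r _.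
by rewrite ffunE.
Qed.

Lemma md_zero (ev : P -> option C) (m : mon) p : (0 < m p)%nat -> ev p = Some 0 -> monval_dom ev m = 0.
Proof.
move=> Hm Hp; rewrite /monval_dom (bigD1 p) /=; last by rewrite /indom Hp.
by rewrite Hp /= expr0n; case: (m p) Hm => // k _; rewrite mul0r.
Qed.

Lemma restrict_mon2 (ev : P -> option C) p q : indom ev p -> Defs.restrict ev (mon2 p q) = Defs.restrict ev (mvar q).
Proof.
move=> Hp; apply/ffunP => r; rewrite !ffunE.
case: ifP => // Hr; case: eqP => // E; by rewrite E Hp in Hr.
Qed.

Lemma adm_mvar c p : admissible (c, mvar p) = rel2 p.1 p.2.
Proof.
apply/forallP/idP => [/(_ p)|H r]; first by rewrite /= ffunE eqxx.
by rewrite /= ffunE; case: eqP => [->|].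
Qed.

Lemma adm_mon2 c p q : admissible (c, mon2 p q) = rel2 p.1 p.2 && rel2 q.1 q.2.
Proof.
apply/forallP/andP => [H|[H1 H2] r].
  split; [move: (H p) | move: (H q)]; rewrite /= ffunE eqxx ?addn1 ?add1n //.
rewrite /= ffunE; case: eqP => [->|_] //; case: eqP => [->|_] //.
Qed.

Definition hadm (f : C * mon -> C) (x : C * mon) := if admissible x then f x else 0.

Lemma sum_Ecomp v t s (f : C * mon -> C) :
  \sum_(x <- Ecomp v t s) f x =
  \sum_(s' <- enum 'I_n) \sum_(t' <- enum 'I_n)
     hadm f (muG v s' t', mon2 (t, t') (s', s)) +
  \sum_(s' <- enum 'I_n) hadm f (- muG v s' t, mvar (s', s)).
Proof.
rewrite /Ecomp big_filter big_mkcond big_cat big_allpairs_dep big_map; by rewrite big_map.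
Qed.

Lemma evalE_lin (ev : P -> option C) E :
  evalE ev E = \sum_(x <- E) x.1 * monval ev x.2.
Proof. exact: sum_links. Qed.

Lemma mubeta_lin (ev : P -> option C) E m :
  mubeta ev E m = \sum_(x <- E) x.1 *
     (if Defs.restrict ev x.2 == m then monval_dom ev x.2 else 0).
Proof.
rewrite /mubeta big_mkcond.
rewrite (eq_bigr (fun m' => coef E m' *
   (if Defs.restrict ev m' == m then monval_dom ev m' else 0))); first exact: sum_links.
by move=> m' _; case: ifP; rewrite ?mulr0.
Qed.

Lemma occursP (E : seq (C * mon)) p : occurs E p ->
  exists2 x, x \in E & (x.1 != 0) && (0 < x.2 p)%nat.
Proof.
case/hasP => m; rewrite mem_filter => /andP[Hc _] Hp.
have [H|H] := boolP (has (fun x : C * mon => (x.1 != 0) && (x.2 == m)) E).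
  case/hasP: H => x xE /andP[x1 /eqP x2]; exists x => //; by rewrite x1 x2.
exfalso; move: Hc; rewrite /coef big_seq_cond big1 ?eqxx // => x /andP[xE x2].
move/hasPn: H => /(_ x xE); rewrite x2 andbT negbK => /eqP //.
Qed.

Lemma muG_arrow v a b : muG v a b != 0 -> arrow v a b.
Proof. by rewrite /Defs.muG; case: ifP => // _; rewrite eqxx. Qed.

Lemma Ecomp_mem v t s x : x \in Ecomp v t s -> x.1 != 0 ->
  (exists s' t', [/\ arrow v s' t', rel2 t t', rel2 s' s &
      x = (muG v s' t', mon2 (t, t') (s', s))]) \/
  (exists s', [/\ arrow v s' t, rel2 s' s & x = (- muG v s' t, mvar (s', s))]).
Proof.
rewrite mem_filter => /andP[Ha]; rewrite mem_cat => /orP[].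
  case/allpairsP => -[s' t'] [_ _ /= Ex] Hx; subst x; left; exists s', t'.
  by move: Ha; rewrite adm_mon2 => /andP[H1 H2]; split => //; apply: muG_arrow.
case/mapP => s' _ Ex Hx; subst x; right; exists s'.
by move: Ha; rewrite adm_mvar => H1; split => //; apply: muG_arrow; rewrite -oppr_eq0.
Qed.

Lemma extremal_uniq v a b s' t' : extremal_arrow v a b -> arrow v s' t' ->
  (s' <= a)%nat -> (b <= t')%nat -> s' = a /\ t' = b.
Proof.
case/andP => _ /forallP H Ha Hs Ht; move: (H s') => /forallP /(_ t').
rewrite Ha /=; case: eqP => [[-> ->] //|_] /=.
by rewrite ltnNge Hs ltnNge Ht.
Qed.

Lemma fb_diag (ev : P -> option C) beta a : extends ev (fbeta F C beta) ->
  ev (a, a) = Some (if a \in beta then 1 else 0).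
Proof.
move=> H; apply: H; rewrite /fbeta /= /Defs.rel2 eqxx leqnn /= eqxx /=.
by case: (a \in beta).
Qed.

Lemma fb_indom_diag (ev : P -> option C) beta a : extends ev (fbeta F C beta) ->
  indom ev (a, a).
Proof. by move=> H; rewrite /indom (fb_diag a H). Qed.

Lemma fb_col (ev : P -> option C) beta a b : extends ev (fbeta F C beta) ->
  rel2 a b -> b \notin beta -> ev (a, b) = Some 0.
Proof.
move=> H Hr Hb; apply: H; rewrite /fbeta /= Hr.
case: eqP => [->|_] /=; first by rewrite (negbTE Hb).
by rewrite Hb orbT.
Qed.

Lemma fb_row (ev : P -> option C) beta a b : extends ev (fbeta F C beta) ->
  rel2 a b -> a \in beta -> a != b -> ev (a, b) = Some 0.
Proof.
by move=> H Hr Ha Hab; apply: H; rewrite /fbeta /= Hr (negbTE Hab) /= Ha.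
Qed.

Lemma sum_pick2 (h : 'I_n -> 'I_n -> C) a b :
  (forall s' t', (s', t') != (a, b) -> h s' t' = 0) ->
  \sum_(s' <- enum 'I_n) \sum_(t' <- enum 'I_n) h s' t' = h a b.
Proof.
move=> H; rewrite (bigD1_seq a) ?mem_enum ?enum_uniq //= (bigD1_seq b) ?mem_enum ?enum_uniq //=.
rewrite big1 ?addr0; last by move=> t' Ht; apply: H; rewrite xpair_eqE eqxx.
rewrite big1 ?addr0 // => s' Hs; rewrite big1 // => t' _; apply: H.
by rewrite xpair_eqE (negbTE Hs).
Qed.

Lemma sum_pick1 (h : 'I_n -> C) a :
  (forall s', s' != a -> h s' = 0) -> \sum_(s' <- enum 'I_n) h s' = h a.
Proof.
move=> H; rewrite (bigD1_seq a) ?mem_enum ?enum_uniq //= big1 ?addr0 //.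
Qed.

Lemma sum_inner (h : 'I_n -> 'I_n -> C) b :
  (forall s' t', t' != b -> h s' t' = 0) ->
  \sum_(s' <- enum 'I_n) \sum_(t' <- enum 'I_n) h s' t' =
  \sum_(s' <- enum 'I_n) h s' b.
Proof.
move=> H; apply: eq_bigr => s' _; apply: sum_pick1 => t'; exact: H.
Qed.

Lemma rel2_diag a : rel2 a a.
Proof. by rewrite /Defs.rel2 eqxx leqnn. Qed.

Lemma evalE_zero (ev : P -> option C) v t s : is_peval src tgt F mu ev -> rel3 v t s ->
  (forall p, occurs (Ecomp v t s) p -> indom ev p) -> evalE ev (Ecomp v t s) = 0.
Proof.
move=> [_ Hpe] H3 Hocc.
case Hl: (links (Ecomp v t s)) => [|m l]; first by rewrite /evalE Hl big_nil.
have: m \in links (Ecomp v t s) by rewrite Hl mem_head.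
rewrite mem_filter => /andP[_]; rewrite mem_undup => /mapP[x xE Em].
have [p Hp]: exists p, (0 < m p)%nat.
  subst m; move: xE; rewrite mem_filter mem_cat => /andP[_ /orP[]].
  - case/allpairsP => -[s' t'] [_ _ /= Ex]; subst x; exists (t, t').
    by rewrite /= ffunE eqxx.
  - case/mapP => s' _ Ex; subst x; exists (s', s); by rewrite /= ffunE eqxx.
have Hoc: occurs (Ecomp v t s) p by apply/hasP; exists m => //; rewrite Hl mem_head.
by case: (Hpe v t s H3 p Hoc (fun q Hq _ => Hocc q Hq)).
Qed.

Lemma ext_beta (ev : P -> option C) beta v a b : is_peval src tgt F mu ev ->
  extends ev (fbeta F C beta) -> extremal_arrow v a b -> a \in beta -> b \in beta.
Proof.
move=> Hpe Hext Hex Ha.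
have Harr: arrow v a b by case/andP: Hex.
have H3: rel3 v b a.
  move: (Harr) => /and3P[Fa Fb _]; rewrite /Defs.rel3 Fa Fb /=.
  by apply/existsP; exists a; apply/existsP; exists b; rewrite Harr !leqnn.
have Hocc : forall p, occurs (Ecomp v b a) p -> indom ev p.
  move=> p /occursP[x xE /andP[x1 xp]].
  case: (Ecomp_mem xE x1) => [[s' [t' [Ha' /andP[_ Ht] /andP[_ Hs] Ex]]] | [s' [Ha' /andP[_ Hs] Ex]]].
  - have [E1 E2] := extremal_uniq Hex Ha' Hs Ht; subst.
    move: xp; rewrite /= ffunE; case: eqP => [->|_]; first by rewrite (fb_indom_diag _ Hext).
    by case: eqP => [->|//]; rewrite (fb_indom_diag _ Hext).
  - have [E1 _] := extremal_uniq Hex Ha' Hs (leqnn b); subst.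
    move: xp; rewrite /= ffunE; case: eqP => [->|//]; by rewrite (fb_indom_diag _ Hext).
have E0 := evalE_zero Hpe H3 Hocc.
rewrite evalE_lin sum_Ecomp in E0.
rewrite (@sum_pick2 _ a b) in E0; last first.
  move=> s' t' Hst; rewrite /hadm adm_mon2; case: ifP => // /andP[/andP[_ Ht] /andP[_ Hs]].
  have [Hm|Hm] := eqVneq (muG v s' t') 0; first by rewrite /= Hm mul0r.
  have [E1 E2] := extremal_uniq Hex (muG_arrow Hm) Hs Ht.
  by move: Hst; rewrite E1 E2 eqxx.
rewrite (@sum_pick1 _ a) in E0; last first.
  move=> s' Hs'; rewrite /hadm adm_mvar; case: ifP => // /andP[_ Hs].
  have [Hm|Hm] := eqVneq (muG v s' b) 0; first by rewrite /= Hm oppr0 mul0r.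
  have [E1 _] := extremal_uniq Hex (muG_arrow Hm) Hs (leqnn b).
  by move: Hs'; rewrite E1 eqxx.
move: E0; rewrite /hadm adm_mon2 adm_mvar /= !rel2_diag /= monval_mon2 monval_mvar.
rewrite (fb_diag a Hext) (fb_diag b Hext) Ha /=.
case: (b \in beta) => //=; rewrite mul0r mulr0 mulr1 add0r => /eqP.
rewrite oppr_eq0 /Defs.muG Harr => Hm; move: Harr => /and3P[_ _].
by rewrite Hm.
Qed.

Lemma notrel_T (ev : P -> option C) beta v t s :
  extends ev (fbeta F C beta) -> t \in beta -> ~~ beta_relevant src tgt F mu ev v t s.
Proof.
move=> Hext Ht; rewrite /beta_relevant negb_and; apply/orP; right.
apply/hasPn => m _; rewrite negbK mubeta_lin sum_Ecomp.
rewrite (@sum_inner _ t); last first.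
  move=> s' t' Htt; rewrite /hadm adm_mon2; case: ifP => // /andP[H1 _].
  rewrite /= (@md_zero ev _ (t, t')) ?if_same ?mulr0 //.
    by rewrite ffunE eqxx.
  by apply: (fb_row Hext) => //; rewrite eq_sym.
rewrite -big_split big1 //= => s' _.
rewrite /hadm adm_mon2 adm_mvar rel2_diag /=; case: ifP => _; last by rewrite addr0.
rewrite restrict_mon2 ?(fb_indom_diag _ Hext) // md_mon2 ?(fb_indom_diag _ Hext) //.
rewrite (fb_diag t Hext) Ht /= mul1r.
case: ifP => _; [by rewrite mulNr addrN | by rewrite !mulr0 addr0].
Qed.

Lemma notrel_S (ev : P -> option C) beta v t s :
  extends ev (fbeta F C beta) -> s \notin beta -> ~~ beta_relevant src tgt F mu ev v t s.
Proof.
move=> Hext Hs; rewrite /beta_relevant negb_and; apply/orP; right.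
apply/hasPn => m _; rewrite negbK mubeta_lin big1_seq // => x /andP[_ xE].
have [x1|x1] := eqVneq x.1 0; first by rewrite x1 mul0r.
have Hz: forall s', rel2 s' s -> ev (s', s) = Some 0.
  by move=> s' Hr; apply: (fb_col Hext).
case: (Ecomp_mem xE x1) => [[s' [t' [_ _ Hr Ex]]] | [s' [_ Hr Ex]]]; subst x.
  by rewrite /= (@md_zero ev _ (s', s)) ?if_same ?mulr0 ?Hz // ffunE eqxx addn1.
by rewrite /= (@md_zero ev _ (s', s)) ?if_same ?mulr0 ?Hz // ffunE eqxx.
Qed.

Lemma ext_src_uniq v a a' b : extremal_arrow v a b -> extremal_arrow v a' b -> a = a'.
Proof.
move=> H1 H2; have A1: arrow v a b by case/andP: H1.
have A2: arrow v a' b by case/andP: H2.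
case: (leqP a' a) => Hle.
  by have [-> _] := extremal_uniq H1 A2 Hle (leqnn b).
by have [-> _] := extremal_uniq H2 A1 (ltnW Hle) (leqnn b).
Qed.

Lemma ext_tgt_uniq v a b b' : extremal_arrow v a b -> extremal_arrow v a b' -> b = b'.
Proof.
move=> H1 H2; have A1: arrow v a b by case/andP: H1.
have A2: arrow v a b' by case/andP: H2.
case: (leqP b b') => Hle.
  by have [_ ->] := extremal_uniq H1 A2 (leqnn a) Hle.
by have [_ ->] := extremal_uniq H2 A1 (leqnn a) (ltnW Hle).
Qed.

Lemma part1 v t s :
  (#|[set p : 'I_n * 'I_n | extremal_edge src tgt F mu v t s p.1 p.2]| <= 2)%nat.
Proof.
pose A := [set p : P | (p.2 == s) && extremal_arrow v p.1 t].
pose B := [set p : P | (p.1 == t) && extremal_arrow v s p.2].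
have HA: (#|A| <= 1)%nat.
  apply/card_le1_eqP => -[a1 b1] -[a2 b2]; rewrite !inE /=.
  move=> /andP[/eqP-> H1] /andP[/eqP-> H2]; by rewrite (ext_src_uniq H1 H2).
have HB: (#|B| <= 1)%nat.
  apply/card_le1_eqP => -[a1 b1] -[a2 b2]; rewrite !inE /=.
  move=> /andP[/eqP-> H1] /andP[/eqP-> H2]; by rewrite (ext_tgt_uniq H1 H2).
apply: (@leq_trans #|A :|: B|).
  apply: subset_leq_card; apply/subsetP => -[a b]; rewrite !inE /=.
  by case/andP => _ /orP[] /andP[-> ->]; rewrite ?orbT.
rewrite cardsU; apply: leq_trans (leq_subr _ _) _.
by rewrite -(addn1 1); apply: leq_add.
Qed.
End Aux.
Unset Implicit Arguments. Set Strict Implicit.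

Theorem lemma2p25 (Q0 Q1 : finType) (src tgt : Q1 -> Q0) (n : nat)
    (F : 'I_n -> Q0) (mu : Q1 -> 'I_n -> 'I_n -> CC) :
  (forall (v : Q1) (t s : 'I_n),
     red_triple src tgt F mu v t s ->
     (#|[set p : 'I_n * 'I_n | extremal_edge src tgt F mu v t s p.1 p.2]|
        <= 2)%nat) /\
  (forall (beta : {set 'I_n}) (ev : 'I_n * 'I_n -> option CC),
     is_peval src tgt F mu ev ->
     extends ev (fbeta F CC beta) ->
     (forall ev' : 'I_n * 'I_n -> option CC,
        is_peval src tgt F mu ev' -> extends ev' (fbeta F CC beta) ->
        extends ev' ev) ->
     forall (v : Q1) (t s i j : 'I_n),
       extremal_edge src tgt F mu v t s i j ->
       beta_relevant src tgt F mu ev v t s ->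
       i \notin beta /\ j \in beta).
Proof.
split; first by move=> v t s _; apply: part1.
move=> beta ev Hpe Hext _ v t s i j /andP[_ Hcase] Hrel.
case/orP: Hcase => /andP[/eqP Ej Hex]; subst.
- split.
    apply/negP => Hi; have Ht := ext_beta Hpe Hext Hex Hi.
    by move: Hrel; rewrite (negbTE (@notrel_T _ _ src tgt n F CC mu ev beta v t s Hext Ht)).
  apply/negPn/negP => Hs; by move: Hrel; rewrite (negbTE (@notrel_S _ _ src tgt n F CC mu ev beta v t s Hext Hs)).
- split.
    apply/negP => Ht; by move: Hrel; rewrite (negbTE (@notrel_T _ _ src tgt n F CC mu ev beta v t s Hext Ht)).
  apply/negPn/negP => Hj.
  have Hs: s \notin beta.
    by apply/negP => Hs; move: Hj; rewrite (ext_beta Hpe Hext Hex Hs).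
  by move: Hrel; rewrite (negbTE (@notrel_S _ _ src tgt n F CC mu ev beta v t s Hext Hs)).
Qed.
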